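(* For every positive integer $N$ and every nonempty index $\boldsymbol{k}$, $F_N(\boldsymbol{k};t)=G_N(\boldsymbol{k}^\vee;t)$ in $\mathbb{Q}(t)$.
   Context: $t$ is an indeterminate, $[n]=\{1,\dots,n\}$, $(a)_n=a(a+1)\cdots(a+n-1)$, $\binom{t}{n}=t(t-1)\cdots(t-n+1)/n!$. An index is a tuple of positive integers. $F_N$: for $\boldsymbol{k}=(k_1,\dots,k_r)$ and $A\subset[r]$, $\overline{S}_{r,N}(A)=\{(n_1,\dots,n_r)\in[N-1]^r: n_{i-1}\le n_i\text{ if }1<i\in[r]\setminus A,\ n_{i-1}<n_i\text{ if }1<i\in A\}$ and $F_N(\boldsymbol{k};t)=\sum_{A\subset[r]}(-1)^{\#A}\sum_{\overline{S}_{r,N}(A)}\prod_{i\in A}(N-n_i+t)^{-k_i}\prod_{i\in[r]\setminus A}n_i^{-k_i}$. $G_N$: with $[r]^1_{\boldsymbol{k}}=\{i:k_i=1\}$ and $S^\star_{r,N}(A)$ the set of $(n_1,\dots,n_r)\in[N-1]^r$ such that for each $i\in[r-1]$: $n_i\le n_{i+1}$ if $i\in A$ or $i+1\notin A$, and $n_i<n_{i+1}$ if $i\notin A$ and $i+1\in A$, $G_N(\boldsymbol{k};t)=\sum_{A\subset[r]^1_{\boldsymbol{k}}\setminus\{r\}}\sum_{S^\star_{r,N}(A)}\prod_{i\in A}(N-n_i+t)^{-1}\prod_{i\in[r]\setminus A}n_i^{-k_i}\cdot(-1)^{n_r-1}\binom{t}{n_r}\frac{(1-N)_{n_r}}{(1-N-t)_{n_r}}$.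 Hoffman dual: an index $\boldsymbol{k}$ of weight $w$ is uniquely written as $(1\,\square_1\,1\,\square_2\cdots\square_{w-1}\,1)$ with each $\square_j$ a comma or a plus sign (read as addition); $\boldsymbol{k}^\vee$ is the index obtained by interchanging commas and plus signs in every box. *)

(* Defs.v *)
From HB Require Import structures.
From mathcomp Require Import all_boot all_order all_algebra fraction.
Set Implicit Arguments. Unset Strict Implicit. Unset Printing Implicit Defensive.
Import Order.TTheory GRing.Theory Num.Theory.
Local Open Scope ring_scope.

Definition Qt : Type := {fraction {poly rat}}.
Definition tQ : Qt := tofrac ('X : {poly rat}).

Definition is_index (k : seq nat) : bool := all (fun ki => 0 < ki)%N k.

(* Hoffman dual.  An index of weight w is written 1 [] 1 [] ... [] 1 with
   w-1 boxes; a box is encoded as a bool: true = comma, false = plus. *)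
Definition boxes_of_index (k : seq nat) : seq bool :=
  behead (flatten [seq true :: nseq ki.-1 false | ki <- k]).
Definition index_of_boxes (b : seq bool) : seq nat :=
  foldr (fun c acc => if c then (1 :: acc)%N else ((head 1 acc).+1 :: behead acc)%N)
        [:: 1%N] b.
Definition hoffman_dual (k : seq nat) : seq nat :=
  index_of_boxes (map negb (boxes_of_index k)).

Definition poch (a : Qt) (n : nat) : Qt := \prod_(i < n) (a + i%:R).
Definition binomt (t : Qt) (n : nat) : Qt := (\prod_(i < n) (t - i%:R)) / (n`!)%:R.

(* Tuples (n_1,...,n_r) in [N-1]^r are encoded by f : {ffun 'I_r -> 'I_(N.-1)},
   with n_{i+1} = f i + 1 (0-based position i).  nval f i is n at 0-based
   position i (0 if out of range). *)
Definition nval r N (f : {ffun 'I_r -> 'I_(N.-1)}) (i : nat) : nat :=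
  if insub i is Some j then (f j).+1 else 0%N.
Definition memA r (A : {set 'I_r}) (i : nat) : bool :=
  if insub i is Some j then j \in A else false.

(* \overline{S}_{r,N}(A), shifted to 0-based positions: for consecutive
   positions i, i+1 < r: n_i < n_{i+1} if i+1 in A, else n_i <= n_{i+1}. *)
Definition inSbar r N (A : {set 'I_r}) (f : {ffun 'I_r -> 'I_(N.-1)}) : bool :=
  [forall i : 'I_r, (i.+1 < r)%N ==>
     (if memA A i.+1 then (nval f i < nval f i.+1)%N
      else (nval f i <= nval f i.+1)%N)].

Definition inSstar r N (A : {set 'I_r}) (f : {ffun 'I_r -> 'I_(N.-1)}) : bool :=
  [forall i : 'I_r, (i.+1 < r)%N ==>
     (if (memA A i || ~~ memA A i.+1) then (nval f i <= nval f i.+1)%N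
      else (nval f i < nval f i.+1)%N)].

Definition F_N (N : nat) (k : seq nat) (t : Qt) : Qt :=
  let r := size k in
  \sum_(A : {set 'I_r}) (-1) ^+ #|A| *
    \sum_(f : {ffun 'I_r -> 'I_(N.-1)} | inSbar A f)
       ((\prod_(i in A) (N%:R - (nval f i)%:R + t) ^- (nth 0%N k i)) *
        (\prod_(i in ~: A) ((nval f i)%:R : Qt) ^- (nth 0%N k i))).

Definition G_N (N : nat) (k : seq nat) (t : Qt) : Qt :=
  let r := size k in
  \sum_(A : {set 'I_r} | [forall i in A, (nth 0%N k i == 1%N) && (i.+1 != r)])
    \sum_(f : {ffun 'I_r -> 'I_(N.-1)} | inSstar A f)
       ((\prod_(i in A) (N%:R - (nval f i)%:R + t)^-1) *
        (\prod_(i in ~: A) ((nval f i)%:R : Qt) ^- (nth 0%N k i)) *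
        ((-1) ^+ (nval f r.-1).-1 * binomt t (nval f r.-1) *
         poch (1 - N%:R) (nval f r.-1) / poch (1 - N%:R - t) (nval f r.-1))).

(* Main.v *)
Require Import Defs.
From HB Require Import structures.
From mathcomp Require Import all_boot all_order all_algebra fraction.
From mathcomp Require Import ring.
Set Implicit Arguments. Unset Strict Implicit. Unset Printing Implicit Defensive.
Import Order.TTheory GRing.Theory Num.Theory.
Local Open Scope ring_scope.


Local Notation tof := (@FracField.tofrac {poly rat}).

Lemma tofracz (c : int) : (c%:~R : Qt) = tof (c%:~R).
Proof. by rewrite rmorph_int. Qed.

Lemma tQ_int_neq0 (c : int) : (c%:~R + tQ : Qt) != 0.
Proof.
rewrite /tQ tofracz -tofracD tofrac_eq0.
apply/negP=> /eqP H.
have : size (c%:~R + 'X : {poly rat}) = 2%N.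
  by rewrite addrC -(rmorph_int (@polyC _)) size_XaddC.
by rewrite H size_poly0.
Qed.

Lemma natQ_neq0 n : ((n.+1)%:R : Qt) != 0.
Proof.
rewrite -(rmorph_nat tof) tofrac_eq0 -polyC_natr polyC_eq0.
by rewrite pnatr_eq0.
Qed.


Definition fall (F : fieldType) (a : F) n := \prod_(j < n) (a - j%:R).
Definition xx (F : fieldType) (i : nat) : F := (i%:R + 1)^-1.
Definition yy (F : fieldType) (v : F) i : F := (v - i%:R)^-1.
Definition al (F : fieldType) (v : F) i p : F :=
  (-1)^+i * ('C(p,i))%:R * fall (v - 1 - p%:R) i / fall v i.
Definition be (F : fieldType) (v : F) i p : F :=
  (-1)^+i * ('C(p,i))%:R * fall (v - 1 - p%:R) i.+1 / fall v i.+1.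
Definition ga (F : fieldType) (v : F) i p : F := - al v i p * (p%:R - i%:R) / (v - i%:R).

Definition goodv (F : fieldType) (v : F) :=
  (forall i : nat, v - i%:R != 0) /\ (forall i : nat, i%:R + 1 != 0 :> F).

Lemma fall_neq0 (F : fieldType) (v : F) n : goodv v -> fall v n != 0.
Proof. by move=> [H _]; apply/prodf_neq0 => j _; apply: H. Qed.

Lemma fallS (F : fieldType) (a : F) n : fall a n.+1 = fall a n * (a - n%:R).
Proof. by rewrite /fall big_ord_recr. Qed.

Lemma fallSl (F : fieldType) (a : F) n : fall a n.+1 = a * fall (a - 1) n.
Proof.
rewrite /fall big_ord_recl subr0; congr (_ * _).
by apply: eq_bigr => j _; rewrite lift0 -natr1; ring.
Qed.

Lemma binS_Q (F : fieldType) p i : (i%:R + 1) * ('C(p,i.+1))%:R = (p%:R - i%:R) * ('C(p,i))%:R :> F.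
Proof.
have := mul_bin_left p i.
case: (leqP i p) => hip.
  by move=> /(congr1 (fun n => n%:R : F)); rewrite !natrM natrB // natr1.
rewrite bin_small ?bin_small //; last by apply: ltnW.
by rewrite !mulr0.
Qed.

Lemma binD_Q (F : fieldType) q i : (q%:R + 1) * ('C(q,i))%:R = (q%:R + 1 - i%:R) * ('C(q.+1,i))%:R :> F.
Proof.
have := mul_bin_down q.+1 i.
case: (leqP i q.+1) => hip.
  move=> /(congr1 (fun n => n%:R : F)); rewrite !natrM natrB // /=.
  by rewrite -natr1.
rewrite !bin_small //; last by apply: ltnW.
by rewrite !mulr0.
Qed.

Lemma L_be (F : fieldType) (v : F) i p : goodv v ->
  be v i p = al v i p * (v - 1 - p%:R - i%:R) / (v - i%:R).
Proof.
move=> Hv; rewrite /be /al !fallS.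
have h1 := fall_neq0 i Hv; have h2 := Hv.1 i.
field; rewrite h1 h2 //.
Qed.

Lemma L_al1 (F : fieldType) (v : F) i p : goodv v ->
  al v i.+1 p * ((i%:R + 1) * (v - i%:R)) = - al v i p * (p%:R - i%:R) * (v - 1 - p%:R - i%:R).
Proof.
move=> Hv; rewrite /al fallS fallS exprS.
have h1 := fall_neq0 i Hv; have h2 := Hv.1 i.
have hb := binS_Q F p i.
set C1 := ('C(p, i.+1))%:R in hb *; set C0 := ('C(p, i))%:R in hb *.
set fa := fall _ i; set fv := fall v i.
have -> : (-1 * (-1) ^+ i * C1 * (fa * (v - 1 - p%:R - i%:R)) / (fv * (v - i%:R)) *
      ((i%:R + 1) * (v - i%:R))) = - ((-1) ^+ i * ((i%:R + 1) * C1) * fa * (v - 1 - p%:R - i%:R) / fv).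
  by field; rewrite h1 h2.
rewrite hb; field; rewrite h1 //.
Qed.

Lemma L_bem (F : fieldType) (v : F) i p : goodv v ->
  p%:R * be v i p.-1 = al v i p * (p%:R - i%:R) * (v - p%:R) / (v - i%:R).
Proof.
move=> Hv.
have h1 := fall_neq0 i Hv; have h2 := Hv.1 i.
case: p => [|q].
  rewrite mul0r /al; case: i h1 h2 => [|i] h1 h2.
    by rewrite subrr !(mulr0, mul0r).
  by rewrite bin0n /= !(mulr0, mul0r).
rewrite /= /be /al (fallSl (v - 1 - q%:R)) (fallS v).
have hb := binD_Q F q i.
rewrite -natr1.
have -> : v - 1 - q%:R - 1 = v - 1 - (q%:R + 1) by ring.
have -> : v - 1 - q%:R = v - (q%:R + 1) by ring.
set C1 := ('C(q.+1, i))%:R in hb *; set C0 := ('C(q, i))%:R in hb *.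
set fa := fall _ i; set fv := fall v i.
have -> : (q%:R + 1) * ((-1) ^+ i * C0 * ((v - (q%:R + 1)) * fa) / (fv * (v - i%:R)))
   = (-1) ^+ i * ((q%:R + 1) * C0) * ((v - (q%:R + 1)) * fa) / (fv * (v - i%:R)) by ring.
rewrite hb; field; rewrite h1 h2 //.
Qed.

Lemma L_al1' (F : fieldType) (v : F) i p : goodv v ->
  al v i.+1 p = - al v i p * (p%:R - i%:R) * (v - 1 - p%:R - i%:R) / ((i%:R + 1) * (v - i%:R)).
Proof.
move=> Hv; have h1 := Hv.2 i; have h2 := Hv.1 i.
rewrite -(L_al1 i p Hv); field; rewrite h1 h2 //.
Qed.

Definition Sc (F : fieldType) (v : F) i q := q%:R * be v i q.-1 / (i%:R + 1).

Lemma P3f (F : fieldType) (v : F) j p : goodv v ->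
  xx F j * be v j p + yy v j * al v j p = al v j p * xx F p - al v j.+1 p * xx F p.
Proof.
move=> Hv; have h1 := Hv.2 j; have h2 := Hv.1 j; have h3 := Hv.2 p.
rewrite (L_al1' j p Hv) (L_be j p Hv) /xx /yy.
field; rewrite h1 h2 h3 //.
Qed.

Lemma P3t (F : fieldType) (v : F) j p : goodv v ->
  xx F j * ga v j p - yy v j * al v j p = - al v j p * yy v p + al v j.+1 p * yy v p.
Proof.
move=> Hv; have h1 := Hv.2 j; have h2 := Hv.1 j; have h3 := Hv.1 p.
rewrite (L_al1' j p Hv) /ga /xx /yy.
field; rewrite h1 h2 h3 //.
Qed.

Lemma P4f (F : fieldType) (v : F) i p : goodv v ->
  be v i p * xx F p = al v i p * xx F p - yy v i * al v i p.
Proof.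
move=> Hv; have h2 := Hv.1 i; have h3 := Hv.2 p.
rewrite (L_be i p Hv) /xx /yy.
field; rewrite h2 h3 //.
Qed.

Lemma P4t (F : fieldType) (v : F) i p : goodv v ->
  ga v i p * yy v p = - al v i p * yy v p - yy v i * - al v i p.
Proof.
move=> Hv; have h2 := Hv.1 i; have h3 := Hv.1 p.
rewrite /ga /xx /yy.
field; rewrite h2 h3 //.
Qed.

Lemma P1 (F : fieldType) (v : F) i p : goodv v ->
  be v i p + ga v i p = Sc v i p.+1 - Sc v i p.
Proof.
move=> Hv; have h1 := Hv.2 i; have h2 := Hv.1 i.
rewrite /Sc (L_bem i p Hv) /= -natr1 (L_be i p Hv) /ga.
field; rewrite h1 h2 //.
Qed.

Lemma P5 (F : fieldType) (v : F) i q : goodv v ->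
  xx F q * Sc v i q.+1 = xx F i * be v i q.
Proof.
move=> Hv; have h1 := Hv.2 i; have h3 := Hv.2 q.
rewrite /Sc /= -natr1 /xx.
field; rewrite h1 h3 //.
Qed.

Lemma P6 (F : fieldType) (v : F) i q : goodv v ->
  - yy v q * Sc v i q = xx F i * ga v i q.
Proof.
move=> Hv; have h1 := Hv.2 i; have h2 := Hv.1 i; have h3 := Hv.1 q.
rewrite /Sc (L_bem i q Hv) /xx /yy /ga.
field; rewrite h1 h2 h3 //.
Qed.

Lemma tele_up (F : fieldType) (g : nat -> F) n i : (i <= n)%N ->
  \sum_(j < n) (i <= j)%N%:R * (g j - g j.+1) = g i - g n.
Proof.
elim: n => [|n IH] hi.
  by rewrite big_ord0; move: hi; rewrite leqn0 => /eqP ->; rewrite subrr.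
rewrite big_ord_recr /=.
case: (leqP i n) => hin.
  by rewrite IH // mul1r; ring.
have -> : i = n.+1 by apply/eqP; rewrite eqn_leq hi hin.
rewrite mul0r addr0 subrr big1 // => j _.
by rewrite ltnNge (ltnW (ltn_ord j)) mul0r.
Qed.

Lemma tele_pre (F : fieldType) (h : nat -> F) n m : (m <= n)%N ->
  \sum_(j < n) (j < m)%N%:R * (h j.+1 - h j) = h m - h 0%N.
Proof.
elim: n m => [|n IH] m hm.
  by rewrite big_ord0; move: hm; rewrite leqn0 => /eqP ->; rewrite subrr.
rewrite big_ord_recr /=.
case: (leqP m n) => hmn.
  by rewrite IH // mul0r addr0.
have -> : m = n.+1 by apply/eqP; rewrite eqn_leq hm hmn.
rewrite mul1r.
have -> : \sum_(i < n) (i < n.+1)%N%:R * (h i.+1 - h i) = \sum_(i < n) (i < n)%N%:R * (h i.+1 - h i).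
  by apply: eq_bigr => j _; rewrite ltn_ord ltnS (ltnW (ltn_ord j)).
by rewrite IH //; ring.
Qed.

Lemma sum_eq1 (F : fieldType) n i (f : nat -> F) : (i < n)%N ->
  \sum_(j < n) (i == j :> nat)%:R * f j = f i.
Proof.
move=> hi; rewrite (bigD1 (Ordinal hi)) //= eqxx mul1r big1 ?addr0 // => j hj.
have -> : (i == j :> nat) = false.
  by apply/negbTE; apply: contra hj => /eqP e; apply/eqP/val_inj.
by rewrite mul0r.
Qed.

Definition KK (F : fieldType) (v : F) i (bi : bool) p (bp : bool) : F :=
  if bi then (if bp then - al v i p else al v i p) else (if bp then ga v i p else be v i p).
Definition FC (F : fieldType) (v : F) i p (bp : bool) : F :=
  if bp then (i < p)%N%:R * - yy v p else (i <= p)%N%:R * xx F p.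
Definition GC (F : fieldType) (v : F) i (bi : bool) p (bp : bool) : F :=
  if bp then (if bi then i <= p else i < p)%N%:R * yy v p else (i <= p)%N%:R * xx F p.
Definition dF (F : fieldType) (v : F) p (bp : bool) : F := if bp then yy v p else xx F p.
Definition dG (F : fieldType) p (bp : bool) : F := if bp then 0 else xx F p.
Definition baseF (F : fieldType) (v : F) p (bp : bool) : F := if bp then - yy v p else xx F p.
Definition baseG (F : fieldType) (v : F) p (bp : bool) : F := if bp then yy v p else xx F p.

Lemma al_big (F : fieldType) (v : F) n p : (p < n)%N -> al v n p = 0.
Proof. by move=> h; rewrite /al bin_small // !(mulr0, mul0r). Qed.

Lemma P3 (F : fieldType) (v : F) j p bp : goodv v ->
  xx F j * KK v j false p bp + yy v j * KK v j true p bp =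
  KK v j true p bp * dF v p bp - KK v j.+1 true p bp * dF v p bp.
Proof.
move=> Hv; case: bp; rewrite /KK /dF.
  by rewrite mulrN P3t //; ring.
by rewrite P3f.
Qed.

Lemma P4 (F : fieldType) (v : F) i p bp : goodv v ->
  KK v i false p bp * dF v p bp = KK v i true p bp * dF v p bp - yy v i * KK v i true p bp.
Proof. by move=> Hv; case: bp; rewrite /KK /dF ?P4t ?P4f. Qed.

Lemma I1 (F : fieldType) (v : F) n i bi p bp : goodv v -> (i < n)%N -> (p < n)%N ->
  KK v i bi p bp * dF v p bp =
  \sum_(j < n) \sum_(bj : bool) GC v i bi j bj * KK v j bj p bp.
Proof.
move=> Hv hi hp.
have E : forall j : 'I_n, \sum_(bj : bool) GC v i bi j bj * KK v j bj p bp =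
   (i <= j)%N%:R * (KK v j true p bp * dF v p bp - KK v j.+1 true p bp * dF v p bp)
   - (~~ bi)%:R * (i == j :> nat)%:R * (yy v j * KK v j true p bp).
  move=> j; rewrite big_bool /= -P3 // /GC.
  case: bi => /=; first by ring.
  rewrite ltn_neqAle; case: eqP => [->|_]; rewrite ?eqxx ?leqnn /=; ring.
rewrite (eq_bigr _ (fun j _ => E j)) sumrB.
rewrite (tele_up (fun j => KK v j true p bp * dF v p bp) (ltnW hi)).
have Qn : KK v n true p bp = 0 by rewrite /KK (@al_big _ v n p hp) oppr0; case: (bp).
rewrite Qn mul0r subr0.
have -> : \sum_(j < n) (~~ bi)%:R * (i == j :> nat)%:R * (yy v j * KK v j true p bp)
  = (~~ bi)%:R * \sum_(j < n) (i == j :> nat)%:R * (yy v j * KK v j true p bp).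
  by rewrite mulr_sumr; apply: eq_bigr => j _; rewrite -mulrA.
rewrite (sum_eq1 (fun j => yy v j * KK v j true p bp) hi).
clear E; case: bi; rewrite /= ?mul0r ?subr0 //.
by rewrite mul1r -P4.
Qed.

Lemma Sc0 (F : fieldType) (v : F) i : Sc v i 0 = 0.
Proof. by rewrite /Sc !mul0r. Qed.

Lemma I2 (F : fieldType) (v : F) n i bi q bq : goodv v -> (i < n)%N -> (q < n)%N ->
  \sum_(j < n) \sum_(bj : bool) KK v i bi j bj * FC v j q bq = dG F i bi * KK v i bi q bq.
Proof.
move=> Hv hi hq.
under eq_bigr => j _ do rewrite big_bool /= -mulrDl.
case: bi => /=.
  by rewrite mul0r big1 // => j _; rewrite addNr mul0r.
under eq_bigr => j _ do rewrite addrC P1 //.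
case: bq; rewrite /FC /=.
  have -> : \sum_(j < n) (Sc v i j.+1 - Sc v i j) * ((j < q)%N%:R * - yy v q)
     = - yy v q * \sum_(j < n) (j < q)%N%:R * (Sc v i j.+1 - Sc v i j).
    by rewrite mulr_sumr; apply: eq_bigr => j _; ring.
  by rewrite (tele_pre (Sc v i) (ltnW hq)) Sc0 subr0 P6.
have -> : \sum_(j < n) (Sc v i j.+1 - Sc v i j) * ((j <= q)%N%:R * xx F q)
   = xx F q * \sum_(j < n) (j < q.+1)%N%:R * (Sc v i j.+1 - Sc v i j).
  by rewrite mulr_sumr; apply: eq_bigr => j _; ring.
by rewrite (tele_pre (Sc v i) hq) Sc0 subr0 P5.
Qed.

Lemma I3 (F : fieldType) (v : F) n i bi : goodv v -> (i < n)%N ->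
  \sum_(j < n) \sum_(bj : bool) KK v i bi j bj = if bi then 0 else Sc v i n.
Proof.
move=> Hv hi.
under eq_bigr => j _ do rewrite big_bool /=.
case: bi => /=; first by rewrite big1 // => j _; rewrite addNr.
under eq_bigr => j _ do rewrite addrC P1 //.
have := tele_pre (Sc v i) (leqnn n); rewrite Sc0 subr0 => <-.
by apply: eq_bigr => j _; rewrite ltn_ord mul1r.
Qed.

Lemma I4 (F : fieldType) (v : F) n p bp : goodv v -> (p < n)%N ->
  \sum_(j < n) \sum_(bj : bool) baseG v j bj * KK v j bj p bp = baseF v p bp.
Proof.
move=> Hv hp.
under eq_bigr => j _ do rewrite big_bool /= addrC P3 //.
have := tele_up (fun j => KK v j true p bp * dF v p bp) (leq0n n).
rewrite /= => H.
have -> : \sum_(j < n) (KK v j true p bp * dF v p bp - KK v j.+1 true p bp * dF v p bp)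
  = \sum_(j < n) (0 <= j)%N%:R * (KK v j true p bp * dF v p bp - KK v j.+1 true p bp * dF v p bp).
  by apply: eq_bigr => j _; rewrite mul1r.
rewrite H.
have a0 : al v 0 p = 1 by rewrite /al /fall !big_ord0 bin0 expr0 !mul1r invr1.
rewrite (@al_big _ v n p hp) a0 oppr0 /dF /baseF; case: (bp); rewrite ?mulN1r ?mul1r ?mul0r ?subr0 //.
Qed.

Lemma fall_nat (F : fieldType) n m : fall (n%:R : F) m = (n ^_ m)%:R.
Proof.
elim: m => [|m IH]; first by rewrite /fall big_ord0 ffactn0.
rewrite fallS IH ffactnSr natrM.
case: (leqP m n) => h; first by rewrite natrB.
by rewrite ffact_small // mulr0n !mul0r.
Qed.

Lemma phi_gen (F : fieldType) (t v : F) n j : goodv v -> v = n%:R + t -> (j < n)%N ->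
  (j`!)%:R != 0 :> F ->
  Sc v j n = (-1)^+j * (fall t j.+1 / ((j.+1)`!)%:R) * ((-1)^+j.+1 * fall (n%:R) j.+1)
             / ((-1)^+j.+1 * fall v j.+1).
Proof.
move=> Hv hv hj hf.
have hn : (0 < n)%N by apply: leq_ltn_trans hj.
have h1 := fall_neq0 j.+1 Hv; have h2 := Hv.2 j.
have hs : (-1) ^+ j.+1 != 0 :> F by rewrite expf_neq0 // oppr_eq0 oner_eq0.
rewrite /Sc /be.
have -> : v - 1 - (n.-1)%:R = t.
  by rewrite hv -{1}(prednK hn) -natr1; ring.
rewrite fall_nat ffactnS -bin_ffact factS !natrM -(prednK hn) /= -natr1.
set C := ('C(_, _))%:R; set fa := fall t _.
field; rewrite h1 hs hf addrC h2 //.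
Qed.


Definition SS (F : fieldType) n (f : nat -> bool -> F) : F :=
  \sum_(s : 'I_n * bool) f s.1 s.2.

Lemma SSE (F : fieldType) n (f : nat -> bool -> F) :
  SS n f = \sum_(j < n) \sum_(bj : bool) f j bj.
Proof. by rewrite /SS pair_bigA. Qed.

Lemma SS_swap (F : fieldType) n (a : nat -> bool -> F) (B : nat -> bool -> nat -> bool -> F) c :
  SS n (fun i bi => a i bi * SS n (fun j bj => B i bi j bj * c j bj)) =
  SS n (fun j bj => SS n (fun i bi => a i bi * B i bi j bj) * c j bj).
Proof.
rewrite /SS.
under eq_bigr => s _ do rewrite mulr_sumr.
rewrite exchange_big /=; apply: eq_bigr => s' _.
by rewrite mulr_suml; apply: eq_bigr => s _; rewrite mulrA.
Qed.

Lemma SS_ext (F : fieldType) n (f g : nat -> bool -> F) :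
  (forall (j : 'I_n) bj, f j bj = g j bj) -> SS n f = SS n g.
Proof. by move=> H; apply: eq_bigr => s _; apply: H. Qed.

Fixpoint WF (F : fieldType) (v : F) n (b : seq bool) (i : nat) (bi : bool) : F :=
  match b with
  | [::] => 1
  | true :: b' => SS n (fun j bj => FC v i j bj * WF v n b' j bj)
  | false :: b' => dF v i bi * WF v n b' i bi
  end.

Fixpoint WG (F : fieldType) (v : F) n (ph : nat -> F) (b : seq bool) (i : nat) (bi : bool) : F :=
  match b with
  | [::] => if bi then 0 else ph i
  | true :: b' => SS n (fun j bj => GC v i bi j bj * WG v n ph b' j bj)
  | false :: b' => dG F i bi * WG v n ph b' i bi
  end.

Lemma KW (F : fieldType) (v : F) n (ph : nat -> F) : goodv v ->
  (forall i, (i < n)%N -> ph i = Sc v i n) ->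
  forall b (i : nat) bi, (i < n)%N ->
  SS n (fun j bj => KK v i bi j bj * WF v n b j bj) = WG v n ph (map negb b) i bi.
Proof.
move=> Hv Hph; elim=> [|c b IH] i bi hi /=.
  rewrite SSE.
  under eq_bigr => j _ do under eq_bigr => bj _ do rewrite mulr1.
  by rewrite I3 // Hph.
case: c => /=.
  rewrite SS_swap.
  rewrite (SS_ext (g := fun j bj => (dG F i bi * KK v i bi j bj) * WF v n b j bj)); last first.
    by move=> j bj; rewrite SSE (I2 bi bj Hv hi (ltn_ord j)).
  rewrite -IH //.
  by rewrite /SS mulr_sumr; apply: eq_bigr => s _; rewrite mulrA.
rewrite (SS_ext (g := fun j bj => SS n (fun k bk => GC v i bi k bk * KK v k bk j bj) * WF v n b j bj)).
  rewrite -SS_swap; apply: SS_ext => k bk; congr (_ * _).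
  by rewrite IH.
move=> j bj; rewrite mulrA (I1 bi bj Hv hi (ltn_ord j)) SSE //.
Qed.

Lemma dual_main (F : fieldType) (v : F) n (ph : nat -> F) : goodv v ->
  (forall i, (i < n)%N -> ph i = Sc v i n) ->
  forall b, SS n (fun j bj => baseF v j bj * WF v n b j bj) =
            SS n (fun j bj => baseG v j bj * WG v n ph (map negb b) j bj).
Proof.
move=> Hv Hph b.
rewrite (SS_ext (f := fun j bj => baseG v j bj * WG v n ph (map negb b) j bj)
   (g := fun j bj => baseG v j bj * SS n (fun k bk => KK v j bj k bk * WF v n b k bk))); last first.
  by move=> j bj; rewrite (KW Hv Hph).
rewrite SS_swap; apply: SS_ext => k bk; congr (_ * _).
by rewrite SSE I4.
Qed.


Definition ov (S : Type) r (g : {ffun 'I_r -> S}) (i : nat) : option S :=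
  if (insub i : option 'I_r) is Some j then Some (g j) else None.

Lemma ov_ord (S : Type) r (g : {ffun 'I_r -> S}) (i : 'I_r) : ov g i = Some (g i).
Proof. by rewrite /ov valK. Qed.

Lemma ov_lt (S : Type) r (g : {ffun 'I_r -> S}) i (h : (i < r)%N) : ov g i = Some (g (Ordinal h)).
Proof. by rewrite /ov insubT. Qed.

Lemma ov_ge (S : Type) r (g : {ffun 'I_r -> S}) i : (r <= i)%N -> ov g i = None.
Proof. by move=> h; rewrite /ov insubF // ltnNge h. Qed.

Definition consf (S : Type) r (s : S) (h : {ffun 'I_r -> S}) : {ffun 'I_r.+1 -> S} :=
  [ffun i : 'I_r.+1 => if unlift ord0 i is Some j then h j else s].

Lemma ov_cons0 (S : Type) r s (h : {ffun 'I_r -> S}) : ov (consf s h) 0 = Some s.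
Proof. by rewrite (ov_lt _ (ltn0Sn r)) ffunE /= (_ : Ordinal _ = ord0) ?unlift_none //; apply: val_inj. Qed.

Lemma ov_consS (S : Type) r s (h : {ffun 'I_r -> S}) i : ov (consf s h) i.+1 = ov h i.
Proof.
case: (ltnP i r) => hi.
  rewrite (ov_lt h hi) (ov_lt _ (hi : (i.+1 < r.+1)%N)) ffunE.
  have -> : Ordinal (hi : (i.+1 < r.+1)%N) = lift ord0 (Ordinal hi) by apply: val_inj.
  by rewrite liftK.
by rewrite !ov_ge.
Qed.

Lemma sum_ffunS (R : nmodType) (S : finType) r (F : {ffun 'I_r.+1 -> S} -> R) :
  \sum_(g : {ffun 'I_r.+1 -> S}) F g = \sum_(s : S) \sum_(h : {ffun 'I_r -> S}) F (consf s h).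
Proof.
rewrite pair_bigA /=.
pose hh := fun p : S * {ffun 'I_r -> S} => consf p.1 p.2.
pose hi := fun g : {ffun 'I_r.+1 -> S} => (g ord0, [ffun j => g (lift ord0 j)]).
rewrite (reindex hh) //.
apply: onW_bij; exists hi.
  case=> s h; rewrite /hi /hh /consf /= ffunE unlift_none; congr (_, _).
  by apply/ffunP => j; rewrite !ffunE liftK.
move=> g; apply/ffunP => i; rewrite /hh /hi /consf /= ffunE.
case: (unliftP ord0 i) => [j ->|->]; by rewrite ?ffunE.
Qed.

Fixpoint Ch (R : ringType) (S : finType) (r : nat) (L : nat -> option S -> option S -> R)
   (E : option S -> R) : R :=
  match r with
  | 0 => E None
  | r'.+1 => \sum_(s : S) E (Some s) * Ch r' (fun i => L i.+1) (L 0%N (Some s))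
  end.

Lemma ChE (R : comRingType) (S : finType) r (L : nat -> option S -> option S -> R) (E : option S -> R) :
  \sum_(g : {ffun 'I_r -> S}) E (ov g 0) * \prod_(i < r) L i (ov g i) (ov g i.+1) = Ch r L E.
Proof.
elim: r L E => [|r IH] L E /=.
  rewrite (eq_bigr (fun _ => E None)); last by move=> g _; rewrite big_ord0 mulr1 ov_ge.
  by rewrite sumr_const card_ffun card_ord expn0.
rewrite sum_ffunS; apply: eq_bigr => s _.
rewrite -IH mulr_sumr; apply: eq_bigr => h _.
rewrite ov_cons0 big_ord_recl ov_cons0 ov_consS; congr (_ * (_ * _)).
by apply: eq_bigr => i _; rewrite lift0 !ov_consS.
Qed.

Lemma Ch_scale (R : comRingType) (S : finType) r (L : nat -> option S -> option S -> R) (E : option S -> R) c :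
  Ch r L (fun o => c * E o) = c * Ch r L E.
Proof.
case: r => [|r] //=.
by rewrite mulr_sumr; apply: eq_bigr => s _; rewrite mulrA.
Qed.


Definition flat (k : seq nat) : seq bool := flatten [seq true :: nseq ki.-1 false | ki <- k].

Lemma iob_shape b : exists a rest, index_of_boxes b = a :: rest /\ (0 < a)%N /\
   all (fun x => 0 < x)%N rest /\ flat (a :: rest) = true :: b.
Proof.
elim: b => [|c b [a [rest [E [ha [hr hf]]]]]]; first by exists 1%N, [::].
case: c => /=; rewrite E /=.
  exists 1%N, (a :: rest); split=> //; split=> //; split; first by rewrite /= ha hr.
  by rewrite -hf.

exists a.+1, rest; split=> //; split=> //; split=> //.
clear E; move: hf; rewrite /flat /=; case: a ha => // a _ /= [<-] //.
Qed.

Lemma boxes_flat k : is_index k -> k != [::] -> flat k = true :: boxes_of_index k.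
Proof. by case: k => // a k _ _; rewrite /boxes_of_index /flat /=. Qed.

Lemma hoffman_props k :
  is_index (hoffman_dual k) /\ hoffman_dual k != [::] /\
  boxes_of_index (hoffman_dual k) = map negb (boxes_of_index k).
Proof.
rewrite /hoffman_dual; have [a [rest [E [ha [hr hf]]]]] := iob_shape (map negb (boxes_of_index k)).
rewrite E; split; first by rewrite /is_index /= ha hr.
split=> //.
by rewrite /boxes_of_index -/(flat (a :: rest)) hf.
Qed.


Definition vv N : Qt := (N.-1)%:R + tQ.

Lemma goodvv N : goodv (vv N).
Proof.
split=> [i|i]; last by rewrite natr1 natQ_neq0.
have -> : vv N - i%:R = ((N.-1)%:Z - i%:Z)%:~R + tQ.
  by rewrite /vv; move: (N.-1) => M; rewrite intrB; ring.
exact: tQ_int_neq0.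
Qed.

Lemma vvE N j : (0 < N)%N -> (N%:R - (j.+1)%:R + tQ : Qt) = vv N - j%:R.
Proof.
move=> hN; rewrite /vv -natr1 -{1}(prednK hN) -natr1; move: (N.-1) => M; ring.
Qed.

Definition St N := ('I_N.-1 * bool)%type.

Definition valF N a (j : nat) (bj : bool) : Qt :=
  if bj then - (N%:R - (j.+1)%:R + tQ) ^- a else ((j.+1)%:R) ^- a.
Definition condF N (j : nat) (o : option (St N)) : Qt :=
  match o with None => 1 | Some s => (if s.2 then j < s.1 else j <= s.1)%N%:R end.
Arguments condF N j o : clear implicits.
Definition LF N (k : seq nat) (i : nat) (c o : option (St N)) : Qt :=
  match c with None => 1 | Some s => valF N (nth 0%N k i) s.1 s.2 * condF N s.1 o end.
Arguments LF N k i c o : clear implicits.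

Definition phiQ N m : Qt :=
  (-1) ^+ m.-1 * binomt tQ m * poch (1 - N%:R) m / poch (1 - N%:R - tQ) m.
Definition valG N a (j : nat) (bj : bool) : Qt :=
  if bj then (a == 1)%N%:R * (N%:R - (j.+1)%:R + tQ)^-1 else ((j.+1)%:R) ^- a.
Definition condG N (j : nat) (bj : bool) (o : option (St N)) : Qt :=
  match o with
  | None => if bj then 0 else phiQ N j.+1
  | Some s => (if bj || ~~ s.2 then j <= s.1 else j < s.1)%N%:R end.
Arguments condG N j bj o : clear implicits.
Definition LG N (k : seq nat) (i : nat) (c o : option (St N)) : Qt :=
  match c with None => 1 | Some s => valG N (nth 0%N k i) s.1 s.2 * condG N s.1 s.2 o end.
Arguments LG N k i c o : clear implicits.

Lemma WF_nseq (F : fieldType) (v : F) n m b j bj :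
  WF v n (nseq m false ++ b) j bj = dF v j bj ^+ m * WF v n b j bj.
Proof. by elim: m => [|m IH] /=; rewrite ?expr0 ?mul1r // IH exprS mulrA. Qed.

Lemma WG_nseq (F : fieldType) (v : F) n ph m b j bj :
  WG v n ph (nseq m false ++ b) j bj = dG F j bj ^+ m * WG v n ph b j bj.
Proof. by elim: m => [|m IH] /=; rewrite ?expr0 ?mul1r // IH exprS mulrA. Qed.

Lemma valF_E N a j bj : (0 < N)%N -> (0 < a)%N ->
  valF N a j bj = baseF (vv N) j bj * dF (vv N) j bj ^+ a.-1.
Proof.
move=> hN ha; rewrite /valF /baseF /dF /yy /xx -(prednK ha) /=.
case: bj; rewrite -exprVn exprS ?mulNr //.
by rewrite vvE.
by rewrite -natr1.
Qed.

Lemma condF_E N a j0 (j : 'I_N.-1) bj : (0 < N)%N -> (0 < a)%N ->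
  condF N j0 (Some (j, bj)) * valF N a j bj = FC (vv N) j0 j bj * dF (vv N) j bj ^+ a.-1.
Proof.
move=> hN ha; rewrite valF_E // /condF /FC /baseF /=.
by case: bj; rewrite mulrA.
Qed.

Lemma chainF N (k : seq nat) : (0 < N)%N -> is_index k -> forall (j0 : nat) b0,
  Ch (size k) (LF N k) (condF N j0) = WF (vv N) N.-1 (flat k) j0 b0.
Proof.
move=> hN; elim: k => [|a k IH] hk j0 b0 //=.
move: hk; rewrite /is_index /= => /andP [ha hk].
rewrite /SS; apply: eq_bigr => [[j bj]] _ /=.
have -> : LF N (a :: k) 0 (Some (j, bj)) = fun o => valF N a j bj * condF N j o by [].
rewrite Ch_scale (IH hk j bj) WF_nseq mulrA -/(flat k) -(@condF_E N a j0 j bj hN ha) mulrA //.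
Qed.

Lemma startF N (k : seq nat) : (0 < N)%N -> is_index k -> k != [::] ->
  Ch (size k) (LF N k) (fun _ => 1) =
  SS N.-1 (fun j bj => baseF (vv N) j bj * WF (vv N) N.-1 (boxes_of_index k) j bj).
Proof.
move=> hN; case: k => [|a k] // hk _ /=.
move: hk; rewrite /is_index /= => /andP [ha hk].
rewrite /SS; apply: eq_bigr => [[j bj]] _ /=.
have -> : LF N (a :: k) 0 (Some (j, bj)) = fun o => valF N a j bj * condF N j o by [].
rewrite Ch_scale (chainF hN hk j bj) mul1r /boxes_of_index /= WF_nseq -/(flat k).
by rewrite mulrA valF_E.
Qed.

Lemma valG_E N a j bj : (0 < N)%N -> (0 < a)%N ->
  valG N a j bj = baseG (vv N) j bj * dG Qt j bj ^+ a.-1.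
Proof.
move=> hN ha; rewrite /valG /baseG /dG /yy /xx -(prednK ha) /=.
case: bj.
  by rewrite expr0n vvE // mulrC.
by rewrite -exprVn exprS -natr1.
Qed.

Lemma condG_E N a j0 b0 (j : 'I_N.-1) bj : (0 < N)%N -> (0 < a)%N ->
  condG N j0 b0 (Some (j, bj)) * valG N a j bj = GC (vv N) j0 b0 j bj * dG Qt j bj ^+ a.-1.
Proof.
move=> hN ha; rewrite valG_E // /condG /GC /baseG /=.
by case: bj; case: b0; rewrite /= mulrA.
Qed.

Definition phv N (j : nat) : Qt := phiQ N j.+1.

Lemma chainG N (k : seq nat) : (0 < N)%N -> is_index k -> forall (j0 : nat) b0,
  Ch (size k) (LG N k) (condG N j0 b0) = WG (vv N) N.-1 (phv N) (flat k) j0 b0.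
Proof.
move=> hN; elim: k => [|a k IH] hk j0 b0 //=.
move: hk; rewrite /is_index /= => /andP [ha hk].
rewrite /SS; apply: eq_bigr => [[j bj]] _ /=.
have -> : LG N (a :: k) 0 (Some (j, bj)) = fun o => valG N a j bj * condG N j bj o by [].
rewrite Ch_scale (IH hk j bj) WG_nseq mulrA -/(flat k) -(@condG_E N a j0 b0 j bj hN ha) mulrA //.
Qed.

Lemma startG N (k : seq nat) : (0 < N)%N -> is_index k -> k != [::] ->
  Ch (size k) (LG N k) (fun _ => 1) =
  SS N.-1 (fun j bj => baseG (vv N) j bj * WG (vv N) N.-1 (phv N) (boxes_of_index k) j bj).
Proof.
move=> hN; case: k => [|a k] // hk _ /=.
move: hk; rewrite /is_index /= => /andP [ha hk].
rewrite /SS; apply: eq_bigr => [[j bj]] _ /=.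
have -> : LG N (a :: k) 0 (Some (j, bj)) = fun o => valG N a j bj * condG N j bj o by [].
rewrite Ch_scale (chainG hN hk j bj) mul1r /boxes_of_index /= WG_nseq -/(flat k).
by rewrite mulrA valG_E.
Qed.

Lemma poch_fall (a : Qt) m : poch a m = (-1) ^+ m * fall (- a) m.
Proof.
rewrite /poch /fall.
rewrite (eq_bigr (fun i : 'I_m => - (- a - i%:R))); last by move=> i _; rewrite opprB opprK addrC.
by rewrite prodrN card_ord.
Qed.

Lemma phv_Sc N j : (0 < N)%N -> (j < N.-1)%N -> phv N j = Sc (vv N) j N.-1.
Proof.
move=> hN hj.
have hf : ((j`!)%:R : Qt) != 0 by rewrite -(prednK (fact_gt0 j)) natQ_neq0.
rewrite (phi_gen (t := tQ) (goodvv N) _ hj hf) //.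
rewrite /phv /phiQ /= !poch_fall /binomt -/(fall tQ j.+1).
have -> : - (1 - N%:R) = (N.-1)%:R :> Qt by rewrite -{1}(prednK hN) -natr1 opprB addrK.
have -> : - (1 - N%:R - tQ) = vv N :> Qt.
  by rewrite /vv -{1}(prednK hN) -natr1; move: (N.-1) => M; ring.
by [].
Qed.


Lemma sum_setffun (R : nmodType) r n (H : {set 'I_r} -> {ffun 'I_r -> 'I_n} -> R) :
  \sum_(A : {set 'I_r}) \sum_(f : {ffun 'I_r -> 'I_n}) H A f =
  \sum_(g : {ffun 'I_r -> 'I_n * bool}) H [set i | (g i).2] [ffun i => (g i).1].
Proof.
rewrite pair_bigA /=.
pose hh := fun g : {ffun 'I_r -> 'I_n * bool} => ([set i | (g i).2], [ffun i => (g i).1]).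
pose hi := fun p : {set 'I_r} * {ffun 'I_r -> 'I_n} => [ffun i => (p.2 i, i \in p.1)].
rewrite (reindex hh) //.
apply: onW_bij; exists hi.
  move=> g; apply/ffunP => i; rewrite /hi /hh /= !ffunE inE.
  by case: (g i).
case=> A f; rewrite /hi /hh /=; congr (_, _).
  by apply/setP => i; rewrite inE ffunE.
by apply/ffunP => i; rewrite !ffunE.
Qed.

Lemma natr_forall (R : comRingType) (I : finType) (P : pred I) :
  ([forall i, P i])%:R = \prod_i (P i)%:R :> R.
Proof.
case: (boolP [forall i, P i]) => [/forallP H|/forallPn [i Hi]].
  by rewrite big1 // => i _; rewrite H.
by rewrite (bigD1 i) //= (negbTE Hi) mul0r.
Qed.

Lemma prod_if (R : comRingType) (I : finType) (A : {set I}) (F G : I -> R) :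
  \prod_i (if i \in A then F i else G i) = \prod_(i in A) F i * \prod_(i in ~: A) G i.
Proof.
rewrite (bigID (mem A)) /=; congr (_ * _).
  by apply: eq_bigr => i ->.
rewrite [RHS](eq_bigl (fun i => ~~ (i \in A))); last by move=> i; rewrite inE.
by apply: eq_bigr => i /negbTE ->.
Qed.

Lemma memA_g r n (g : {ffun 'I_r -> 'I_n * bool}) i :
  memA [set j | (g j).2] i = if ov g i is Some s then s.2 else false.
Proof. by rewrite /memA /ov; case: insub => // j; rewrite inE. Qed.

Lemma nval_g r N (g : {ffun 'I_r -> 'I_N.-1 * bool}) i :
  nval [ffun j => (g j).1] i = if ov g i is Some s then (s.1).+1 else 0%N.
Proof. by rewrite /nval /ov; case: insub => // j; rewrite ffunE. Qed.

Lemma F_chain N k : F_N N k tQ =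
  \sum_(g : {ffun 'I_(size k) -> St N}) \prod_(i < size k) LF N k i (ov g i) (ov g i.+1).
Proof.
rewrite /F_N.
under eq_bigr => A _ do rewrite mulr_sumr big_mkcond /=.
rewrite sum_setffun; apply: eq_bigr => g _.
set A := [set i | (g i).2]; set f := [ffun i => (g i).1].
rewrite [RHS](eq_bigr (fun i : 'I_(size k) =>
   valF N (nth 0%N k i) (g i).1 (g i).2 * condF N (g i).1 (ov g i.+1))); last first.
  by move=> i _; rewrite ov_ord.
rewrite [RHS]big_split /=.
have -> : \prod_(i < size k) condF N (g i).1 (ov g i.+1) = (inSbar A f)%:R.
  rewrite /inSbar natr_forall; apply: eq_bigr => i _.
  rewrite memA_g !nval_g ov_ord /=.
  case: (ltnP i.+1 (size k)) => h.
    by rewrite (ov_lt g h) /=; case: (g (Ordinal h)) => j' []; rewrite ?ltnS.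
  by rewrite (ov_ge g h).
have -> : \prod_(i < size k) valF N (nth 0%N k i) (g i).1 (g i).2 =
   \prod_i (if i \in A then - (N%:R - (nval f i)%:R + tQ) ^- (nth 0%N k i)
            else ((nval f i)%:R : Qt) ^- (nth 0%N k i)).
  apply: eq_bigr => i _; rewrite inE nval_g ov_ord /valF.
  by case: (g i) => j [].
rewrite prod_if prodrN.
by case: (inSbar A f); rewrite ?mulr1 ?mulr0 // mulrA.
Qed.

Lemma last_prod (R : comRingType) r (c : nat -> R) : (0 < r)%N ->
  c r.-1 = \prod_(i < r) (if i.+1 == r then c i else 1).
Proof.
case: r => // r _; rewrite big_ord_recr /= eqxx big1 ?mul1r // => i _.
by rewrite eqSS (ltn_eqF (ltn_ord i)).
Qed.

Lemma if_sum (R : nmodType) (I : finType) (b : bool) (P : pred I) (X : I -> R) :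
  (if b then \sum_(i | P i) X i else 0) = \sum_i (if b && P i then X i else 0).
Proof.
case: b; first by rewrite big_mkcond.
by rewrite big1.
Qed.

Lemma G_chain N l : (0 < size l)%N -> G_N N l tQ =
  \sum_(g : {ffun 'I_(size l) -> St N}) \prod_(i < size l) LG N l i (ov g i) (ov g i.+1).
Proof.
move=> hr; rewrite /G_N big_mkcond /=.
under eq_bigr => A _ do rewrite if_sum.
rewrite sum_setffun; apply: eq_bigr => g _.
set A := [set i | (g i).2]; set f := [ffun i => (g i).1].
set r := size l.
pose U := fun i : 'I_r => ((i \in A) ==> ((nth 0%N l i == 1%N) && (i.+1 != r)))%:R : Qt.
pose V := fun i : 'I_r => ((i.+1 < r)%N ==>
     (if (memA A i || ~~ memA A i.+1) then (nval f i <= nval f i.+1)%N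
      else (nval f i < nval f i.+1)%N))%:R : Qt.
pose W := fun i : 'I_r => if i \in A then (N%:R - (nval f i)%:R + tQ)^-1
                           else ((nval f i)%:R : Qt) ^- (nth 0%N l i).
pose Z := fun i : 'I_r => if i.+1 == r then phiQ N (nval f i) else 1.
rewrite [RHS](eq_bigr (fun i => U i * V i * W i * Z i)); last first.
  move=> i _; rewrite ov_ord /U /V /W /Z inE !memA_g !nval_g ov_ord /=.
  case: (ltnP i.+1 r) => h.
    rewrite (ov_lt g h) (ltn_eqF h) /= mulr1.
    case: (g i) => j bj; case: (g (Ordinal h)) => j' bj' /=.
    by case: bj; case: bj'; rewrite /valG /condG /= ?andbT ?ltnS ?mul1r; first [by rewrite mulrAC | by rewrite mulrC].
  have hi : i.+1 = r by apply/eqP; rewrite eqn_leq h ltn_ord.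
  rewrite (ov_ge g h) hi eqxx /= andbF mulr1.
  case: (g i) => j bj.
  by case: bj; rewrite /valG /condG /= ?mul0r ?mulr0 ?mul1r.
rewrite !big_split /=.
rewrite -[\prod_(i < r) U i]natr_forall -[\prod_(i < r) V i]natr_forall -prod_if.
rewrite -(last_prod (fun i => phiQ N (nval f i)) hr).
have E : forall (b1 b2 : bool) (X Y : Qt), (if b1 && b2 then X * Y else 0) = b1%:R * b2%:R * X * Y.
  by move=> [] [] X Y; rewrite /= ?mul1r ?mul0r.
by rewrite E.
Qed.


Unset Implicit Arguments.

Theorem mainTheorem16 (N : nat) (k : seq nat) :
  (0 < N)%N -> k != [::] -> is_index k ->
  F_N N k tQ = G_N N (hoffman_dual k) tQ.
Proof.
move=> hN hk ik.
have [il [hl hb]] := hoffman_props k.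
move: il hl hb; set l := hoffman_dual k => il hl hb.
have hsl : (0 < size l)%N by case: (l) hl.
rewrite F_chain (G_chain N hsl).
have eF : \sum_(g : {ffun 'I_(size k) -> St N}) \prod_(i < size k) LF N k i (ov g i) (ov g i.+1)
   = Ch (size k) (LF N k) (fun _ => 1).
  by rewrite -ChE; apply: eq_bigr => g _; rewrite mul1r.
have eG : \sum_(g : {ffun 'I_(size l) -> St N}) \prod_(i < size l) LG N l i (ov g i) (ov g i.+1)
   = Ch (size l) (LG N l) (fun _ => 1).
  by rewrite -ChE; apply: eq_bigr => g _; rewrite mul1r.
rewrite eF eG (startF hN ik hk) (startG hN il hl) hb.
apply: dual_main; first exact: goodvv.
by move=> i hi; apply: phv_Sc.
Qed.
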